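(* Let $\Lambda$ be a left cancellative small category, $v\in\Lambda^0$, and $C\in v\Lambda^*$. Then $C\in v\partial\Lambda$ if and only if: for every finite $\mathcal F\subseteq\mathcal D^{(0)}_v$ that does not cover $C$ and every $E\in C$, there exists $G\in\mathcal D^{(0)}_v$ with $G\subseteq E\setminus\bigcup\mathcal F$.
   Context: A left cancellative small category (LCSC) is a small category $\Lambda$ such that $\alpha\beta=\alpha\gamma$ implies $\beta=\gamma$. Composition $\alpha\beta$ is defined when $s(\alpha)=r(\beta)$; $\Lambda^0$ is the set of objects; $v\Lambda=\{\alpha:r(\alpha)=v\}$. For $\alpha\in\Lambda$, $\tau^\alpha(\beta)=\alpha\beta$ on $s(\alpha)\Lambda$ and $\sigma^\alpha:\alpha\Lambda\to s(\alpha)\Lambda$ is its inverse. A zigzag is a tuple $\zeta=(\alpha_1,\beta_1,\dots,\alpha_n,\beta_n)$ with $r(\alpha_i)=r(\beta_i)$ and $s(\alpha_{i+1})=s(\beta_i)$, $s(\zeta)=s(\beta_n)$; the zigzag map $\varphi_\zeta=\sigma^{\alpha_1}\circ\tau^{\beta_1}\circ\cdots\circ\sigma^{\alpha_n}\circ\tau^{\beta_n}$ (partial map) has domain $A(\zeta)\subseteq s(\zeta)\Lambda$. $\mathcal D^{(0)}_v$ is the set of nonempty $A(\zeta)$ with $s(\zeta)=v$, and $\mathcal A_v$ the ring of subsets of $v\Lambda$ generated by it. A filter in $\mathcal D^{(0)}_v$ is a nonempty $C\subseteq\mathcal D^{(0)}_v$ closed under intersection and under supersets within $\mathcal D^{(0)}_v$.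 A finite $\mathcal F\subseteq\mathcal D^{(0)}_v$ covers the filter $C$ if some $E\in C$ satisfies $E\subseteq\bigcup\mathcal F$. $v\Lambda^*$ is the set of filters $C$ in $\mathcal D^{(0)}_v$ such that every finite $\mathcal F\subseteq\mathcal D^{(0)}_v$ with $\mathcal F\cap C=\varnothing$ does not cover $C$; $v\Lambda^{**}$ is its set of maximal elements. $v\Lambda^*$ is identified with the space $X_v$ of ultrafilters of the ring $\mathcal A_v$ via $C\mapsto\mathcal U_C$, the unique ultrafilter of $\mathcal A_v$ with $\mathcal U_C\cap\mathcal D^{(0)}_v=C$ (generated by the sets $E\setminus\bigcup\mathcal F$, $E\in C$, $\mathcal F$ finite not covering $C$); $X_v$ carries the topology with compact open basis $\widehat A=\{C: A\in\mathcal U_C\}$, $A\in\mathcal A_v$. The boundary $v\partial\Lambda$ is the closure of $v\Lambda^{**}$ in $X_v$. *)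

(* Defs.v *)
From Stdlib Require Import List.
Import ListNotations.
Set Implicit Arguments.

(** A small category, with total composition whose values only matter when
    [src a = rng b]; left cancellative. *)
Record LCSC := {
  Obj : Type;
  Mor : Type;
  src : Mor -> Obj;
  rng : Mor -> Obj;
  idm : Obj -> Mor;
  comp : Mor -> Mor -> Mor;
  src_idm : forall v, src (idm v) = v;
  rng_idm : forall v, rng (idm v) = v;
  src_comp : forall a b, src a = rng b -> src (comp a b) = src b;
  rng_comp : forall a b, src a = rng b -> rng (comp a b) = rng a;
  comp_assoc : forall a b c, src a = rng b -> src b = rng c ->
      comp a (comp b c) = comp (comp a b) c;
  comp_id_l : forall a, comp (idm (rng a)) a = a;
  comp_id_r : forall a, comp a (idm (src a)) = a;
  lcancel : forall a b c, src a = rng b -> src a = rng c ->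
      comp a b = comp a c -> b = c
}.

Arguments src {l} _.
Arguments rng {l} _.
Arguments idm {l} _.
Arguments comp {l} _ _.

Section Defs.
Variable L : LCSC.

Definition mset := Mor L -> Prop.
Definition msub (A B : mset) : Prop := forall x, A x -> B x.

(** A zigzag (a1,b1,...,an,bn) is the list [(a1,b1);...;(an,bn)], n >= 1. *)
Fixpoint zchain (l : list (Mor L * Mor L)) : Prop :=
  match l with
  | p :: ((q :: _) as t) => src (fst q) = src (snd p) /\ zchain t
  | _ => True
  end.

Definition is_zigzag (l : list (Mor L * Mor L)) : Prop :=
  l <> [] /\ Forall (fun p => rng (fst p) = rng (snd p)) l /\ zchain l.

Fixpoint zlast (l : list (Mor L * Mor L)) : option (Mor L * Mor L) :=
  match l with
  | [] => None
  | [p] => Some p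
  | _ :: t => zlast t
  end.

Definition zsrc_is (l : list (Mor L * Mor L)) (v : Obj L) : Prop :=
  exists p, zlast l = Some p /\ src (snd p) = v.

(** Graph of the partial zigzag map
    phi = sigma^{a1} o tau^{b1} o ... o sigma^{an} o tau^{bn}:
    [zrel l g d] means phi_l(g) is defined and equals d. *)
Fixpoint zrel (l : list (Mor L * Mor L)) (g d : Mor L) : Prop :=
  match l with
  | [] => g = d
  | (a, b) :: l' => exists e, zrel l' g e /\ rng e = src b /\
                     rng d = src a /\ comp b e = comp a d
  end.

Definition zdom (l : list (Mor L * Mor L)) : mset := fun g => exists d, zrel l g d.

Definition D0 (v : Obj L) (E : mset) : Prop :=
  (exists l, is_zigzag l /\ zsrc_is l v /\ (forall x, E x <-> zdom l x)) /\
  (exists x, E x).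

Definition is_filter (v : Obj L) (C : mset -> Prop) : Prop :=
  (exists E, C E) /\
  (forall E, C E -> D0 v E) /\
  (forall E F, C E -> C F -> C (fun x => E x /\ F x)) /\
  (forall E F, C E -> D0 v F -> msub E F -> C F).

Definition union_of (Fs : list mset) : mset := fun x => exists F, In F Fs /\ F x.

Definition family_in_D0 (v : Obj L) (Fs : list mset) : Prop :=
  forall F, In F Fs -> D0 v F.

Definition covers (Fs : list mset) (C : mset -> Prop) : Prop :=
  exists E, C E /\ msub E (union_of Fs).

Definition in_star (v : Obj L) (C : mset -> Prop) : Prop :=
  is_filter v C /\
  forall Fs, family_in_D0 v Fs -> (forall F, In F Fs -> ~ C F) -> ~ covers Fs C.

Definition in_star_max (v : Obj L) (C : mset -> Prop) : Prop :=
  in_star v C /\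
  forall C', in_star v C' -> (forall E, C E -> C' E) -> (forall E, C' E -> C E).

Inductive ringA (v : Obj L) : mset -> Prop :=
  | ringA_base : forall E, D0 v E -> ringA v E
  | ringA_empty : ringA v (fun _ => False)
  | ringA_union : forall A B, ringA v A -> ringA v B -> ringA v (fun x => A x \/ B x)
  | ringA_diff : forall A B, ringA v A -> ringA v B -> ringA v (fun x => A x /\ ~ B x)
  | ringA_ext : forall A B, ringA v A -> (forall x, A x <-> B x) -> ringA v B.

(** The ultrafilter U_C of A_v attached to C in v Lambda^*: generated by the
    sets E \ U F, E in C, F finite in D0 not covering C. *)
Definition UC (v : Obj L) (C : mset -> Prop) (A : mset) : Prop :=
  ringA v A /\
  exists E Fs, C E /\ family_in_D0 v Fs /\ ~ covers Fs C /\
    msub (fun x => E x /\ ~ union_of Fs x) A.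

(** C in v(boundary Lambda): U_C lies in the closure of v Lambda^{**} in X_v,
    i.e. every basic open neighbourhood hat(A) (A in A_v, A in U_C) contains
    some U_{C'} with C' in v Lambda^{**}. *)
Definition in_boundary (v : Obj L) (C : mset -> Prop) : Prop :=
  forall A, ringA v A -> UC v C A -> exists C', in_star_max v C' /\ UC v C' A.

End Defs.

(* Main.v *)
Require Import Defs.
From Stdlib Require Import List.
From Stdlib Require Import Classical.
From mathcomp Require classical_sets.
Import ListNotations.
Set Implicit Arguments.
Arguments zrel {L} l g d.
Arguments zlast {L} l.
Arguments zchain {L} l.
Arguments is_zigzag {L} l.
Arguments zsrc_is {L} l v.
Arguments zdom {L} l _.

Lemma zorn_sets (T : Type) (P : (T -> Prop) -> Prop) :
  (forall F : (T -> Prop) -> Prop, (forall X, F X -> P X) ->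
     (forall X Y, F X -> F Y -> (forall x, X x -> Y x) \/ (forall x, Y x -> X x)) ->
     P (fun x => exists2 X, F X & X x)) ->
  exists A, P A /\ forall B, (forall x, A x -> B x) -> ~ (forall x, B x -> A x) -> ~ P B.
Proof.
  intros H.
  destruct (@classical_sets.Zorn_bigcup T P) as [A [PA HA]].
  - intros F HF Htot. apply H; [exact HF|exact Htot].
  - exists A; split; [exact PA|]. intros B h1 h2. apply HA. split; assumption.
Qed.

Section Proof.
Variable L : LCSC.
Implicit Types (l t : list (Mor L * Mor L)) (g d : Mor L) (p : Mor L * Mor L).
Implicit Types (v : Obj L) (A B E F H X Y : mset L) (C U : mset L -> Prop) (Fs : list (mset L)).

Definition swp (p : Mor L * Mor L) := (snd p, fst p).
Definition swaprev (l : list (Mor L * Mor L)) := rev (map swp l).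

Lemma swaprev_cons p l : swaprev (p :: l) = swaprev l ++ [swp p].
Proof. reflexivity. Qed.

Lemma zrel_app l1 l2 g d :
  zrel (l1 ++ l2) g d <-> exists e, zrel l2 g e /\ zrel l1 e d.
Proof.
  revert d. induction l1 as [|[a b] l1 IH]; intros d; simpl.
  - split; [intros H; exists d; split; auto| intros [e [H1 H2]]; subst; auto].
  - split.
    + intros [e [H1 H2]]. apply IH in H1. destruct H1 as [f [Hf1 Hf2]].
      exists f; split; auto. exists e; auto.
    + intros [f [Hf [e [He H2]]]]. exists e; split; auto. apply IH. exists f; auto.
Qed.

Lemma zrel_fun l g d1 d2 : zrel l g d1 -> zrel l g d2 -> d1 = d2.
Proof.
  revert d1 d2. induction l as [|[a b] l IH]; simpl; intros d1 d2.
  - intros; subst; auto.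
  - intros [e1 [H1 [r1 [s1 c1]]]] [e2 [H2 [r2 [s2 c2]]]].
    pose proof (IH _ _ H1 H2); subst.
    apply (lcancel L a); [auto|auto|]. congruence.
Qed.

Lemma zrel_swaprev l g d : zrel l g d -> zrel (swaprev l) d g.
Proof.
  revert d. induction l as [|[a b] l IH]; simpl; intros d.
  - intros; subst; reflexivity.
  - intros [e [H1 [r1 [s1 c1]]]]. rewrite swaprev_cons. apply zrel_app.
    exists e. split.
    + simpl. exists d. split; [reflexivity|]. repeat split; auto.
    + apply IH; auto.
Qed.

Lemma zlast_app l1 l2 : l2 <> [] -> zlast (l1 ++ l2) = zlast l2.
Proof.
  intros Hn. induction l1 as [|p t IH]; simpl; auto.
  destruct t as [|q t'].
  - simpl. destruct l2; [congruence|reflexivity].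
  - simpl in *. exact IH.
Qed.

Lemma zchain_app l1 l2 : zchain l1 -> zchain l2 ->
  (forall p q, zlast l1 = Some p -> hd_error l2 = Some q -> src (fst q) = src (snd p)) ->
  zchain (l1 ++ l2).
Proof.
  induction l1 as [|p t IH]; simpl; intros H1 H2 J; auto.
  destruct t as [|p' t'].
  - simpl. destruct l2 as [|q0 l2']; [exact I|]. split; [|exact H2]. apply (J p q0); reflexivity.
  - destruct H1 as [h1 h2]. simpl. split; auto. apply IH; auto.
Qed.

Lemma zchain_tail p l : zchain (p :: l) -> zchain l.
Proof. destruct l; simpl; tauto. Qed.

Lemma hd_swaprev l : hd_error (swaprev l) = option_map swp (zlast l).
Proof.
  induction l as [|p t IH]; auto.
  rewrite swaprev_cons. destruct t as [|q t'].
  - reflexivity.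
  - assert (Hne : swaprev (q :: t') <> []).
    { rewrite swaprev_cons. destruct (swaprev t'); discriminate. }
    destruct (swaprev (q :: t')) as [|x s] eqn:E; [congruence|].
    simpl. simpl in IH. exact IH.
Qed.

Lemma zlast_swaprev p l : zlast (swaprev (p :: l)) = Some (swp p).
Proof. rewrite swaprev_cons. rewrite zlast_app; [reflexivity|discriminate]. Qed.

Lemma zchain_swaprev l : zchain l -> zchain (swaprev l).
Proof.
  induction l as [|p t IH]; simpl; auto.
  intros H. rewrite swaprev_cons. apply zchain_app.
  - apply IH. eapply zchain_tail; eauto.
  - simpl; auto.
  - intros p0 q0 E1 E2. simpl in E2. inversion E2; subst q0.
    destruct t as [|q t']; [discriminate|].
    rewrite zlast_swaprev in E1. inversion E1; subst p0.
    simpl. destruct H as [H _]. symmetry; exact H.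
Qed.

Lemma zigzag_inter l (l' : list (Mor L * Mor L)) v :
  is_zigzag l -> zsrc_is l v -> is_zigzag l' -> zsrc_is l' v ->
  is_zigzag (l' ++ (swaprev l ++ l)) /\ zsrc_is (l' ++ (swaprev l ++ l)) v /\
  (forall x, zdom (l' ++ (swaprev l ++ l)) x <-> zdom l x /\ zdom l' x).
Proof.
  intros [n1 [f1 c1]] [p1 [z1 s1]] [n2 [f2 c2]] [p2 [z2 s2]].
  split; [|split].
  - split; [destruct l'; [congruence|discriminate]|]. split.
    + apply Forall_app; split; auto. apply Forall_app; split; auto.
      unfold swaprev. apply Forall_rev. apply Forall_map.
      eapply Forall_impl; [|exact f1]. intros [a b]; simpl; auto.
    + apply zchain_app; auto.
      * apply zchain_app; auto. apply zchain_swaprev; auto.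
        intros p q E1 E2. destruct l as [|p0 t]; [congruence|].
        rewrite zlast_swaprev in E1. simpl in E2. inversion E1; inversion E2; subst.
        reflexivity.
      * intros p q E1 E2. rewrite z2 in E1; inversion E1; subst p.
        destruct l as [|p0 t]; [congruence|].
        assert (hd_error (swaprev (p0 :: t) ++ p0 :: t) = hd_error (swaprev (p0::t))).
        { destruct (swaprev (p0 :: t)) eqn:E.
          - rewrite swaprev_cons in E. destruct (swaprev t); discriminate.
          - reflexivity. }
        rewrite H, hd_swaprev, z1 in E2. simpl in E2. inversion E2; subst q.
        simpl. congruence.
  - exists p1. split; auto. rewrite !zlast_app; auto; try congruence.
    destruct l; [congruence|]. destruct (swaprev (p :: l)); discriminate.
  - intros x. unfold zdom. split.
    + intros [d H]. apply zrel_app in H. destruct H as [e [He Hd]].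
      apply zrel_app in He. destruct He as [f [Hf He]].
      assert (e = x) by (eapply zrel_fun; [exact He| apply zrel_swaprev; exact Hf]).
      subst e. split; eauto.
    + intros [[d H] [d' H']]. exists d'. apply zrel_app. exists x. split; auto.
      apply zrel_app. exists d. split; auto. apply zrel_swaprev; auto.
Qed.

Lemma D0_ext v A B : D0 v A -> (forall x, A x <-> B x) -> D0 v B.
Proof.
  intros [[l [H1 [H2 H3]]] [x Hx]] E. split.
  - exists l; split; [exact H1|split; [exact H2|]]. intros y; split; intros h.
    + apply H3, E, h.
    + apply E, H3, h.
  - exists x; apply E; auto.
Qed.

Lemma D0_inter v A B : D0 v A -> D0 v B -> (exists x, A x /\ B x) ->
  D0 v (fun x => A x /\ B x).
Proof.
  intros [[l [Hl [Sl El]]] _] [[l' [Hl' [Sl' El']]] _] Hne. split; auto.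
  destruct (zigzag_inter Hl Sl Hl' Sl') as [Z [S D]].
  exists (l' ++ (swaprev l ++ l)). split; [exact Z|split; [exact S|]].
  intros x; split.
  - intros [a b]. apply D. split; [apply El|apply El']; auto.
  - intros h. apply D in h. destruct h. split; [apply El|apply El']; auto.
Qed.

Lemma filter_ext v C X Y : is_filter v C -> C X -> (forall x, X x <-> Y x) -> C Y.
Proof.
  intros [_ [HD [_ Hup]]] HX E. apply (Hup X); auto.
  - eapply D0_ext; eauto.
  - intros x; apply E.
Qed.

Lemma filter_nonempty v C E : is_filter v C -> C E -> exists x, E x.
Proof. intros [_ [HD _]] H. apply HD in H. destruct H; auto. Qed.

Definition ultra v (U : mset L -> Prop) :=
  is_filter v U /\ forall U', is_filter v U' -> (forall E, U E -> U' E) -> forall E, U' E -> U E.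

Lemma ultra_exists v C : is_filter v C ->
  exists U, ultra v U /\ forall E, C E -> U E.
Proof.
  intros HC.
  destruct (@zorn_sets (mset L) (fun X : mset L -> Prop => (forall E, ~ X E) \/ (is_filter v X /\ forall E, C E -> X E)))
    as [A [PA HA]].
  - intros F HF Htot.
    destruct (classic (exists (X : mset L -> Prop) E, F X /\ X E)) as [[X0 [E0 [FX0 XE0]]]|Hno].
    + right.
      assert (HF' : forall (X : mset L -> Prop) E, F X -> X E -> is_filter v X /\ forall E, C E -> X E).
      { intros X E FX XE. destruct (HF X FX) as [h|h]; [exfalso; eapply h; eauto|exact h]. }
      destruct (HF' X0 E0 FX0 XE0) as [Fi0 C0].
      split; [split; [|split; [|split]]|].
      * exists E0. exists X0; auto.
      * intros E [X FX XE]. destruct (HF' X E FX XE) as [[_ [h _]] _]. auto.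
      * intros E E' [X FX XE] [Y FY YE].
        destruct (Htot X Y FX FY) as [s|s].
        -- destruct (HF' Y E' FY YE) as [[_ [_ [hi _]]] _]. exists Y; auto.
        -- destruct (HF' X E FX XE) as [[_ [_ [hi _]]] _]. exists X; auto.
      * intros E E' [X FX XE] D M. destruct (HF' X E FX XE) as [[_ [_ [_ hu]]] _].
        exists X; eauto.
      * intros E CE. exists X0; auto.
    + left. intros E [X FX XE]. apply Hno; eauto.
  - exists A. destruct PA as [Hemp|[FA CA]].
    + exfalso. apply (HA C); [intros x h; exfalso; eapply Hemp; eauto| |right; split; auto].
      intros h. destruct HC as [[E0 HE0] _]. eapply Hemp; eauto.
    + split; auto. split; auto. intros U' FU' AU' E U'E.
      apply NNPP. intros nA. apply (HA U').
      * exact AU'.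
      * intros h. apply nA, h, U'E.
      * right; split; auto.
Qed.

Lemma ultra_disjoint v U F : ultra v U -> D0 v F -> ~ U F ->
  exists E, U E /\ forall x, E x -> ~ F x.
Proof.
  intros [FU MU] DF nUF. apply NNPP. intros Hno.
  assert (Hmeet : forall E, U E -> exists x, E x /\ F x).
  { intros E UE. apply NNPP. intros h. apply Hno. exists E. split; auto.
    intros x Ex Fx. apply h; eauto. }
  pose (C2 := fun H : mset L => D0 v H /\ exists E, U E /\ msub (fun x => E x /\ F x) H).
  assert (FC2 : is_filter v C2).
  { destruct FU as [[E0 UE0] [UD [Ui Uu]]].
    split; [|split; [|split]].
    - exists F. split; auto. exists E0. split; auto. intros x [_ h]; auto.
    - intros E [h _]; auto.
    - intros H1 H2 [D1 [E1 [U1 M1]]] [D2 [E2 [U2 M2]]].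
      pose proof (Ui _ _ U1 U2) as U12.
      destruct (Hmeet _ U12) as [x [[x1 x2] xF]].
      split.
      + apply D0_inter; auto. exists x. split; [apply M1|apply M2]; auto.
      + exists (fun x => E1 x /\ E2 x). split; auto.
        intros y [[y1 y2] yF]. split; [apply M1|apply M2]; auto.
    - intros H1 H2 [D1 [E1 [U1 M1]]] D2 S. split; auto. exists E1. split; auto.
      intros y h. apply S, M1, h. }
  apply nUF. apply (MU C2 FC2).
  - intros E UE. split; [destruct FU as [_ [h _]]; auto|]. exists E. split; auto.
    intros x [h _]; auto.
  - split; auto. destruct FU as [[E0 UE0] _]. exists E0. split; auto. intros x [_ h]; auto.
Qed.

Lemma ultra_avoid v U Fs : ultra v U -> family_in_D0 v Fs -> (forall F, In F Fs -> ~ U F) ->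
  exists H, U H /\ forall x, H x -> ~ union_of Fs x.
Proof.
  intros HU. induction Fs as [|F Fs IH]; intros HD HN.
  - destruct HU as [[[E0 UE0] _] _]. exists E0. split; auto.
    intros x _ [F [h _]]. destruct h.
  - destruct IH as [H1 [UH1 D1]].
    { intros G hG. apply HD. right; auto. }
    { intros G hG. apply HN. right; auto. }
    destruct (@ultra_disjoint v U F HU) as [E [UE DE]].
    { apply HD; left; auto. }
    { apply HN; left; auto. }
    exists (fun x => H1 x /\ E x). split.
    + destruct HU as [[_ [_ [hi _]]] _]. auto.
    + intros x [h1 h2] [G [[<-|hG] Gx]].
      * eapply DE; eauto.
      * eapply D1; eauto. exists G; auto.
Qed.

Lemma ultra_star v U : ultra v U -> in_star v U.
Proof.
  intros HU. split; [apply HU|]. intros Fs HD HN [E0 [UE0 S0]].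
  destruct (ultra_avoid HU HD HN) as [H [UH DH]].
  destruct HU as [FU _].
  destruct FU as [a [b [hi c]]].
  assert (U (fun x => E0 x /\ H x)) as U2 by auto.
  destruct (@filter_nonempty v U _ (conj a (conj b (conj hi c))) U2) as [x [x1 x2]].
  eapply DH; eauto.
Qed.

Lemma ringA_union_of v Fs : family_in_D0 v Fs -> ringA v (union_of Fs).
Proof.
  induction Fs as [|F Fs IH]; intros HD.
  - eapply ringA_ext; [apply ringA_empty|]. intros x; split; [intros []|].
    intros [G [[] _]].
  - eapply ringA_ext; [apply ringA_union; [apply ringA_base, HD; left; reflexivity|apply IH]|].
    + intros G hG; apply HD; right; auto.
    + intros x. split.
      * intros [h|[G [hG Gx]]]; [exists F; split; [left|]; auto|exists G; split; [right|]; auto].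
      * intros [G [[<-|hG] Gx]]; [left; auto|right; exists G; auto].
Qed.

End Proof.

Theorem mainTheorem12 (L : LCSC) (v : Obj L) (C : mset L -> Prop)
  (HC : in_star v C) :
  in_boundary v C <->
  (forall (Fs : list (mset L)), family_in_D0 v Fs -> ~ covers Fs C ->
     forall E, C E ->
       exists G, D0 v G /\ msub G (fun x => E x /\ ~ union_of Fs x)).
Proof.
  split.
  - intros HB Fs HD HNC E CE.
    destruct HC as [FC _].
    assert (RA : ringA v (fun x => E x /\ ~ union_of Fs x)).
    { apply ringA_diff. apply ringA_base. destruct FC as [_ [h _]]; auto.
      apply ringA_union_of; auto. }
    destruct (HB _ RA) as [C' [[SC' MC'] [_ [E' [Fs' [CE' [HD' [HNC' Sub]]]]]]]].
    { split; [exact RA|]. exists E, Fs.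
      split; [exact CE|split; [exact HD|split; [exact HNC|intros x h; exact h]]]. }
    destruct (@ultra_exists L v C' (proj1 SC')) as [U [HU CU]].
    pose proof (MC' U (ultra_star HU) CU) as UC'.
    destruct (@ultra_avoid L v U Fs' HU HD') as [H [UH DH]].
    { intros F hF UF. apply HNC'. exists F. split; [apply UC'; auto|].
      intros x Fx. exists F; auto. }
    exists (fun x => E' x /\ H x). destruct HU as [FU _].
    assert (U (fun x => E' x /\ H x)) as U2.
    { destruct FU as [_ [_ [hi _]]]. auto. }
    split.
    + destruct FU as [_ [h _]]. exact (h _ U2).
    + intros x [x1 x2]. apply Sub. split; [exact x1|exact (DH x x2)].
  - intros Hc A RA [_ [E [Fs [CE [HD [HNC Sub]]]]]].
    destruct (Hc Fs HD HNC E CE) as [G [DG SG]].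
    pose (P := fun H : mset L => D0 v H /\ msub G H).
    assert (FP : is_filter v P).
    { split; [|split; [|split]].
      - exists G. split; auto. intros x h; auto.
      - intros H [h _]; auto.
      - intros H1 H2 [D1 S1] [D2 S2]. split.
        + apply D0_inter; auto. destruct DG as [_ [x Gx]]. exists x; auto.
        + intros x h; split; auto.
      - intros H1 H2 [D1 S1] D2 S. split; auto. intros x h; auto. }
    destruct (@ultra_exists L v P FP) as [U [HU PU]].
    exists U. split.
    + split; [apply ultra_star; auto|]. intros C' [FC' _] UC'.
      apply (proj2 HU C' FC' UC').
    + split; auto. exists G, []. split; [apply PU; split; auto; intros x h; auto|].
      split; [intros F []|]. split.
      * intros [E0 [UE0 S0]]. destruct HU as [[_ [h _]] _].
        destruct (h _ UE0) as [_ [x Ex]]. destruct (S0 x Ex) as [F [[] _]].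
      * intros x [Gx _]. apply Sub, SG, Gx.
Qed.
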